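(* Let $\psi:[0,2]\to[0,+\infty)$ be a decreasing $C^1$ function with $\psi(2)=0$ and $\psi'(2)<0$. Let $Q:=(\mathbb{R}^3\setminus\{0\})\times(\mathbb{R}^3\setminus\{0\})\times\mathbb{R}^3$ and define $T:Q\to\mathbb{R}^3$ by $$T(x_1,x_2,v)=\begin{cases}\psi\Big(\Big\|\frac{x_1}{\|x_1\|}-\frac{x_2}{\|x_2\|}\Big\|\Big)\,R\Big(\frac{x_2}{\|x_2\|},\frac{x_1}{\|x_1\|}\Big)v, & \text{if } \frac{x_1}{\|x_1\|}+\frac{x_2}{\|x_2\|}\neq0,\\ 0, & \text{if } \frac{x_1}{\|x_1\|}+\frac{x_2}{\|x_2\|}=0.\end{cases}$$ Then $T$ is locally Lipschitz continuous on $Q$.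
   Context: $\|\cdot\|$ is the Euclidean norm on $\mathbb{R}^3$. For column vectors $a,b$ in the unit sphere $\mathbb{S}^2$ with $a\ne-b$, $R(a,b)=I$ if $a=b$, and otherwise $$R(a,b)=\langle a,b\rangle I-ab^T+ba^T+(1-\langle a,b\rangle)\Big(\frac{a\times b}{\|a\times b\|}\Big)\Big(\frac{a\times b}{\|a\times b\|}\Big)^T.$$ *)

(* Defs.v *)
From HB Require Import structures.
From mathcomp Require Import all_boot all_order all_algebra.
From mathcomp Require Import all_classical all_reals all_analysis.
Set Implicit Arguments. Unset Strict Implicit. Unset Printing Implicit Defensive.
Import Order.TTheory GRing.Theory Num.Theory.
Import numFieldNormedType.Exports.
Local Open Scope classical_set_scope.
Local Open Scope ring_scope.

Section Defs.
Variable R : realType.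

Definition dotv (a b : 'cV[R]_3) : R := \sum_(i < 3) a i 0 * b i 0.

Definition enorm (a : 'cV[R]_3) : R := Num.sqrt (dotv a a).

Definition crossv (a b : 'cV[R]_3) : 'cV[R]_3 :=
  let a0 := a (inord 0) 0 in let a1 := a (inord 1) 0 in let a2 := a (inord 2) 0 in
  let b0 := b (inord 0) 0 in let b1 := b (inord 1) 0 in let b2 := b (inord 2) 0 in
  \col_(i < 3)
    (if nat_of_ord i == 0%N then a1 * b2 - a2 * b1
     else if nat_of_ord i == 1%N then a2 * b0 - a0 * b2
     else a0 * b1 - a1 * b0).

(* the rotation R(a,b) from the paper (only meaningful for unit a, b, a <> -b) *)
Definition Rrot (a b : 'cV[R]_3) : 'M[R]_3 :=
  if a == b then 1%:M
  else let n := (enorm (crossv a b))^-1 *: crossv a b in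
       (dotv a b)%:M - a *m b^T + b *m a^T + (1 - dotv a b) *: (n *m n^T).

Definition unitv (x : 'cV[R]_3) : 'cV[R]_3 := (enorm x)^-1 *: x.

Definition Tmap (psi : R -> R) (x1 x2 v : 'cV[R]_3) : 'cV[R]_3 :=
  if unitv x1 + unitv x2 != 0 then
    psi (enorm (unitv x1 - unitv x2)) *: (Rrot (unitv x2) (unitv x1) *m v)
  else 0.

Definition dist9 (x1 x2 v y1 y2 w : 'cV[R]_3) : R :=
  Num.sqrt (dotv (x1 - y1) (x1 - y1) + dotv (x2 - y2) (x2 - y2) + dotv (v - w) (v - w)).

(* psi is C^1 on the closed interval [0,2] (one-sided derivatives at the
   endpoints), with derivative dpsi *)
Definition C1_on_02_with (psi dpsi : R -> R) : Prop :=
  (forall x, x \in `[0, 2] ->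
     (fun y => (psi y - psi x) / (y - x)) @ within [set y | y \in `[0, 2]] x^'
       --> dpsi x) /\
  {within [set y | y \in `[0, 2]], continuous dpsi}.

Definition locally_lipschitz_on_Q
    (F : 'cV[R]_3 -> 'cV[R]_3 -> 'cV[R]_3 -> 'cV[R]_3) : Prop :=
  forall x1 x2 v : 'cV[R]_3, x1 != 0 -> x2 != 0 ->
  exists r : R, 0 < r /\ exists L : R,
    forall y1 y2 w z1 z2 u : 'cV[R]_3,
      y1 != 0 -> y2 != 0 -> z1 != 0 -> z2 != 0 ->
      dist9 y1 y2 w x1 x2 v < r -> dist9 z1 z2 u x1 x2 v < r ->
      enorm (F y1 y2 w - F z1 z2 u) <= L * dist9 y1 y2 w z1 z2 u.

End Defs.

(* Main.v *)
Require Import Defs.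
From HB Require Import structures.
From mathcomp Require Import all_boot all_order all_algebra.
From mathcomp Require Import all_classical all_reals all_analysis.
From mathcomp Require Import lra ring.
Import Order.TTheory GRing.Theory Num.Theory.
Import numFieldNormedType.Exports.
Local Open Scope ring_scope.

Set Implicit Arguments. Unset Strict Implicit.

Section V.
Local Open Scope classical_set_scope.
Local Open Scope ring_scope.
Variable R : realType.
Implicit Types a b v w : 'cV[R]_3.
Implicit Types x y : 'cV[R]_3.

Local Notation i0 := (inord 0 : 'I_3).
Local Notation i1 := (inord 1 : 'I_3).
Local Notation i2 := (inord 2 : 'I_3).

Lemma ord3P (i : 'I_3) : [\/ i = i0, i = i1 | i = i2].
Proof.
case: i => [[|[|[|k]]] Hk].
- by constructor 1; apply/val_inj; rewrite /= inordK.
- by constructor 2; apply/val_inj; rewrite /= inordK.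
- by constructor 3; apply/val_inj; rewrite /= inordK.
- by [].
Qed.

Lemma sum3 (F : 'I_3 -> R) : \sum_(i < 3) F i = F i0 + F i1 + F i2.
Proof.
rewrite !big_ord_recl big_ord0 addr0 addrA.
congr (F _ + F _ + F _); by apply/val_inj; rewrite /= inordK.
Qed.

Lemma vec3_eq a b : a i0 0 = b i0 0 -> a i1 0 = b i1 0 -> a i2 0 = b i2 0 -> a = b.
Proof.
move=> h0 h1 h2; apply/matrixP => i j; rewrite (ord1 j).
by case: (ord3P i) => ->.
Qed.

Lemma dotvE a b : dotv a b = a i0 0 * b i0 0 + a i1 0 * b i1 0 + a i2 0 * b i2 0.
Proof. by rewrite /dotv sum3. Qed.

Lemma crossvE a b :
  [/\ crossv a b i0 0 = a i1 0 * b i2 0 - a i2 0 * b i1 0,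
      crossv a b i1 0 = a i2 0 * b i0 0 - a i0 0 * b i2 0 &
      crossv a b i2 0 = a i0 0 * b i1 0 - a i1 0 * b i0 0].
Proof. by rewrite /crossv !mxE !inordK. Qed.

Lemma dot_ge0 a : 0 <= dotv a a.
Proof. rewrite dotvE; nra. Qed.

Lemma enorm_ge0 a : 0 <= enorm a.
Proof. exact: sqrtr_ge0. Qed.

Lemma enorm_sq a : enorm a ^+ 2 = dotv a a.
Proof. by rewrite /enorm sqr_sqrtr // dot_ge0. Qed.

Lemma sqrt_le_sq (x y : R) : 0 <= y -> x <= y ^+ 2 -> Num.sqrt x <= y.
Proof.
move=> y0 xy; apply: (le_trans (ler_wsqrtr xy)).
by rewrite sqrtr_sqr ger0_norm.
Qed.

Lemma dotvC a b : dotv a b = dotv b a.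
Proof. rewrite !dotvE; ring. Qed.

Lemma lagrange a b :
  dotv (crossv a b) (crossv a b) = dotv a a * dotv b b - dotv a b ^+ 2.
Proof. case: (crossvE a b) => h0 h1 h2; rewrite !dotvE h0 h1 h2; ring. Qed.

Lemma dot_sq_le a b : dotv a b ^+ 2 <= dotv a a * dotv b b.
Proof.
have := dot_ge0 (crossv a b); rewrite lagrange subr_ge0 //.
Qed.

Lemma CS a b : `|dotv a b| <= enorm a * enorm b.
Proof.
rewrite /enorm -sqrtrM ?dot_ge0 // -sqrtr_sqr.
exact: ler_wsqrtr (dot_sq_le a b).
Qed.

Lemma cross_le a b : enorm (crossv a b) <= enorm a * enorm b.
Proof.
rewrite /enorm -sqrtrM ?dot_ge0 //; apply: ler_wsqrtr.
rewrite lagrange lerBlDr lerDl; exact: sqr_ge0.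
Qed.

Lemma enormD a b : enorm (a + b) <= enorm a + enorm b.
Proof.
apply: sqrt_le_sq; first by rewrite addr_ge0 ?enorm_ge0.
have -> : dotv (a + b) (a + b) = dotv a a + 2 * dotv a b + dotv b b.
  rewrite !dotvE !mxE; ring.
have h := CS a b; have h' := ler_norm (dotv a b).
rewrite sqrrD -!enorm_sq; nra.
Qed.

Lemma enormZ (k : R) a : enorm (k *: a) = `|k| * enorm a.
Proof.
rewrite /enorm.
have -> : dotv (k *: a) (k *: a) = k ^+ 2 * dotv a a by rewrite !dotvE !mxE; ring.
by rewrite sqrtrM ?sqr_ge0 // sqrtr_sqr.
Qed.

Lemma enormN a : enorm (- a) = enorm a.
Proof.
have -> : - a = (-1) *: a by rewrite scaleN1r.
by rewrite enormZ normrN normr1 mul1r.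
Qed.

Lemma enormB a b : enorm (a - b) = enorm (b - a).
Proof. by rewrite -enormN opprB. Qed.

Lemma enorm0 : enorm (0 : 'cV[R]_3) = 0.
Proof. by rewrite /enorm dotvE !mxE !mul0r !addr0 sqrtr0. Qed.

Lemma enorm_eq0 a : enorm a = 0 -> a = 0.
Proof.
move=> /eqP; rewrite sqrtr_eq0 dotvE => h.
have h0 : a i0 0 ^+ 2 <= 0 by nra.
have h1 : a i1 0 ^+ 2 <= 0 by nra.
have h2 : a i2 0 ^+ 2 <= 0 by nra.
apply: vec3_eq; rewrite mxE; apply/eqP; rewrite -sqrf_eq0 eq_le sqr_ge0 andbT //.
Qed.

Lemma enorm_rev a b : `|enorm a - enorm b| <= enorm (a - b).
Proof.
rewrite ler_norml; apply/andP; split.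
  have := enormD (b - a) a; rewrite subrK enormB; lra.
have := enormD (a - b) b; rewrite subrK; lra.
Qed.

Lemma crossB a b a' b' :
  crossv a b - crossv a' b' = crossv (a - a') b + crossv a' (b - b').
Proof.
apply: vec3_eq; rewrite /crossv !mxE !inordK //=; ring.
Qed.

Lemma trmx_mul a v : a^T *m v = (dotv a v)%:M.
Proof.
apply/matrixP => i j; rewrite (ord1 i) (ord1 j) !mxE /dotv.
by apply: eq_bigr => k _; rewrite !mxE.
Qed.

Lemma outer_mul a b v : (a *m b^T) *m v = dotv b v *: a.
Proof. by rewrite -mulmxA trmx_mul mul_mx_scalar. Qed.

Lemma Rrot_mul a b v : a != b ->
  Rrot a b *m v = dotv a b *: v - dotv b v *: a + dotv a v *: b +
    ((1 - dotv a b) * (enorm (crossv a b))^-1 ^+ 2 * dotv (crossv a b) v) *: crossv a b.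
Proof.
move=> ab; rewrite /Rrot (negbTE ab) /=.
rewrite !mulmxDl mulNmx mul_scalar_mx !outer_mul -[(_ *: _) *m v]scalemxAl outer_mul.
set n := crossv a b; set k := (enorm n)^-1.
congr (_ + _); rewrite !scalerA; congr (_ *: _).
have -> : dotv (k *: n) v = k * dotv n v by rewrite !dotvE !mxE; ring.
ring.
Qed.

Definition uu a b := (enorm (a + b))^-1 *: crossv a b.
Definition G a b v := dotv a b *: v - dotv b v *: a + dotv a v *: b +
  (2 * dotv (uu a b) v) *: uu a b.

Lemma crossvv a : crossv a a = 0.
Proof. apply: vec3_eq; rewrite /crossv !mxE !inordK //=; ring. Qed.

Lemma unit_dot a : enorm a = 1 -> dotv a a = 1.
Proof. by move=> h; rewrite -enorm_sq h expr1n. Qed.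

Lemma Rrot_G a b v : enorm a = 1 -> enorm b = 1 -> a + b != 0 ->
  Rrot a b *m v = G a b v.
Proof.
move=> na nb s0; have da := unit_dot na; have db := unit_dot nb.
have [->|ab] := eqVneq a b.
  rewrite /Rrot eqxx mul1mx /G /uu crossvv scaler0 db scale1r.
  have -> : dotv 0 v = 0 by rewrite dotvE !mxE; ring.
  by rewrite mulr0 scale0r addr0 subrK.
rewrite Rrot_mul // /G /uu; congr (_ + _).
have c1 : 1 - dotv a b != 0.
  apply/eqP => h; move/eqP: ab; apply.
  apply/eqP; rewrite -subr_eq0; apply/eqP/enorm_eq0.
  have : dotv (a - b) (a - b) = 0.
    have -> : dotv (a - b) (a - b) = dotv a a + dotv b b - 2 * dotv a b.
      rewrite !dotvE !mxE; ring.
    rewrite da db; lra.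
  by rewrite /enorm => ->; rewrite sqrtr0.
have c2 : 1 + dotv a b != 0.
  apply/eqP => h; move/eqP: s0; apply.
  apply/enorm_eq0.
  have : dotv (a + b) (a + b) = 0.
    have -> : dotv (a + b) (a + b) = dotv a a + dotv b b + 2 * dotv a b.
      rewrite !dotvE !mxE; ring.
    rewrite da db; lra.
  by rewrite /enorm => ->; rewrite sqrtr0.
have hn : (enorm (crossv a b))^-1 ^+ 2 = (1 - dotv a b ^+ 2)^-1.
  by rewrite exprVn enorm_sq lagrange da db mul1r.
have hs : (enorm (a + b))^-1 ^+ 2 = (2 * (1 + dotv a b))^-1.
  rewrite exprVn enorm_sq.
  have -> : dotv (a + b) (a + b) = dotv a a + dotv b b + 2 * dotv a b.
    rewrite !dotvE !mxE; ring.
  by rewrite da db; congr (_^-1); ring.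
have dZ (k : R) w : dotv (k *: w) v = k * dotv w v.
  rewrite !dotvE !mxE; ring.
rewrite dZ scalerA; congr (_ *: _).
rewrite hn.
set e := enorm (a + b); set d := dotv (crossv a b) v.
have -> : 2 * (e^-1 * d) / e = 2 * d * e^-1 ^+ 2 by rewrite expr2; ring.
rewrite /e hs.
have -> : 1 - dotv a b ^+ 2 = (1 - dotv a b) * (1 + dotv a b) by ring.
field; rewrite c1 c2 /=; done.
Qed.

Lemma tb (x y w : 'cV[R]_3) (K : R) : enorm x * enorm y * enorm w <= K -> enorm (dotv x y *: w) <= K.
Proof.
move=> h; apply: le_trans h; rewrite enormZ ler_wpM2r ?enorm_ge0 //; exact: CS.
Qed.

Lemma enormD3 (x y z : 'cV[R]_3) : enorm (x + y + z) <= enorm x + enorm y + enorm z.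
Proof. apply: (le_trans (enormD _ _)); rewrite lerD2r; exact: enormD. Qed.

Lemma G_decomp a b v a' b' v' :
  let u := uu a b in let u' := uu a' b' in
  G a b v - G a' b' v' =
    (dotv a b *: (v - v') + dotv (a - a') b *: v' + dotv a' (b - b') *: v') +
    (dotv (- b) (v - v') *: a + dotv (b' - b) v' *: a + dotv (- b') v' *: (a - a')) +
    (dotv a (v - v') *: b + dotv (a - a') v' *: b + dotv a' v' *: (b - b')) +
    (dotv (2 *: u) (v - v') *: u + dotv (2 *: (u - u')) v' *: u + dotv (2 *: u') v' *: (u - u')).
Proof.
move=> u u'; rewrite /G -/u -/u'.
apply: vec3_eq; rewrite !dotvE !mxE; ring.
Qed.


Lemma Gdiff a b v a' b' v' (V : R) :
  enorm a = 1 -> enorm b = 1 -> enorm a' = 1 -> enorm b' = 1 ->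
  enorm (uu a b) <= 1 -> enorm (uu a' b') <= 1 -> enorm v' <= V ->
  enorm (G a b v - G a' b' v') <=
    5 * enorm (v - v') + 3 * V * (enorm (a - a') + enorm (b - b'))
    + 4 * V * enorm (uu a b - uu a' b').
Proof.
move=> na nb na' nb' hu hu' hv.
rewrite G_decomp /=.
set u := uu a b in hu *; set u' := uu a' b' in hu' *.
have e1 := enorm_ge0 (v - v'); have e2 := enorm_ge0 (a - a');
have e3 := enorm_ge0 (b - b'); have e4 := enorm_ge0 (u - u');
have e5 := enorm_ge0 u; have e6 := enorm_ge0 u'; have e7 := enorm_ge0 v'.
have V0 : 0 <= V by apply: le_trans hv.
have n2 : `|2 : R| = 2 by rewrite ger0_norm.
have g1 : enorm (dotv a b *: (v - v') + dotv (a - a') b *: v' + dotv a' (b - b') *: v')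
   <= enorm (v - v') + V * enorm (a - a') + V * enorm (b - b').
  apply: le_trans (enormD3 _ _ _) _; apply: lerD; [apply: lerD|]; apply: tb;
  rewrite ?na ?nb ?na' ?nb'; nra.
have g2 : enorm (dotv (- b) (v - v') *: a + dotv (b' - b) v' *: a + dotv (- b') v' *: (a - a'))
   <= enorm (v - v') + V * enorm (b - b') + V * enorm (a - a').
  apply: le_trans (enormD3 _ _ _) _; apply: lerD; [apply: lerD|]; apply: tb;
  rewrite ?enormN ?(enormB b') ?na ?nb ?na' ?nb'; nra.
have g3 : enorm (dotv a (v - v') *: b + dotv (a - a') v' *: b + dotv a' v' *: (b - b'))
   <= enorm (v - v') + V * enorm (a - a') + V * enorm (b - b').
  apply: le_trans (enormD3 _ _ _) _; apply: lerD; [apply: lerD|]; apply: tb;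
  rewrite ?na ?nb ?na' ?nb'; nra.
have g4 : enorm (dotv (2 *: u) (v - v') *: u + dotv (2 *: (u - u')) v' *: u + dotv (2 *: u') v' *: (u - u'))
   <= 2 * enorm (v - v') + 2 * V * enorm (u - u') + 2 * V * enorm (u - u').
  apply: le_trans (enormD3 _ _ _) _; apply: lerD; [apply: lerD|]; apply: tb;
  rewrite ![enorm (2 *: _)]enormZ n2.
  - have h1 : enorm u * enorm u <= 1 by nra.
    have h2 : enorm (v - v') * (enorm u * enorm u) <= enorm (v - v') by nra.
    nra.
  - have h1 : enorm v' * enorm u <= V by nra.
    have h2 : enorm (u - u') * (enorm v' * enorm u) <= enorm (u - u') * V by nra.
    nra.
  - have h1 : enorm u' * enorm v' <= V by nra.
    have h2 : enorm (u - u') * (enorm u' * enorm v') <= enorm (u - u') * V by nra.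
    nra.
apply: le_trans (enormD _ _) _.
have := enormD3 (dotv a b *: (v - v') + dotv (a - a') b *: v' + dotv a' (b - b') *: v')
  (dotv (- b) (v - v') *: a + dotv (b' - b) v' *: a + dotv (- b') v' *: (a - a'))
  (dotv a (v - v') *: b + dotv (a - a') v' *: b + dotv a' v' *: (b - b')).
lra.
Qed.


Lemma enorm_neq0 x : x != 0 -> enorm x != 0.
Proof. by move=> x0; apply/eqP => /enorm_eq0 h; move/eqP: x0; apply. Qed.

Lemma unitv_norm x : x != 0 -> enorm (unitv x) = 1.
Proof.
move=> x0; have := enorm_neq0 x0 => h.
rewrite /unitv enormZ ger0_norm ?invr_ge0 ?enorm_ge0 // mulVf //.
Qed.

Lemma unitv_lip x y : x != 0 -> y != 0 ->
  enorm (unitv x - unitv y) <= 2 * enorm (x - y) / enorm y.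
Proof.
move=> x0 y0; have hx := enorm_neq0 x0; have hy := enorm_neq0 y0.
have py : 0 < enorm y by rewrite lt_neqAle eq_sym hy enorm_ge0.
have px : 0 < enorm x by rewrite lt_neqAle eq_sym hx enorm_ge0.
have -> : unitv x - unitv y = (enorm y)^-1 *: (x - y) + ((enorm x)^-1 - (enorm y)^-1) *: x.
  rewrite /unitv; apply: vec3_eq; rewrite !mxE; ring.
apply: le_trans (enormD _ _) _; rewrite !enormZ.
have -> : `|(enorm x)^-1 - (enorm y)^-1| * enorm x = `|enorm y - enorm x| / enorm y.
  have -> : (enorm x)^-1 - (enorm y)^-1 = (enorm y - enorm x) / (enorm x * enorm y).
    by field; rewrite hx hy.
  rewrite normrM [`|(_ * _)^-1|]ger0_norm ?invr_ge0 ?mulr_ge0 ?enorm_ge0 //.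
  by field; rewrite hx hy.
have h1 := enorm_rev y x; rewrite enormB in h1.
rewrite ger0_norm ?invr_ge0 ?enorm_ge0 //.
have -> : 2 * enorm (x - y) / enorm y = (enorm y)^-1 * enorm (x - y) + enorm (x - y) / enorm y.
  by field; rewrite hy.
rewrite lerD2l ler_pM2r // ?invr_gt0 //.
Qed.

Lemma n_le_s a b : enorm a = 1 -> enorm b = 1 -> enorm (crossv a b) <= enorm (a + b).
Proof.
move=> na nb; have da := unit_dot na; have db := unit_dot nb.
rewrite /enorm; apply: ler_wsqrtr; rewrite lagrange da db.
have -> : dotv (a + b) (a + b) = dotv a a + dotv b b + 2 * dotv a b.
  rewrite !dotvE !mxE; ring.
rewrite da db.
have := CS a b; rewrite na nb mul1r ler_norml => /andP[h1 h2].
nra.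
Qed.

Lemma uu_le1 a b : enorm a = 1 -> enorm b = 1 -> enorm (uu a b) <= 1.
Proof.
move=> na nb; rewrite /uu enormZ ger0_norm ?invr_ge0 ?enorm_ge0 //.
have h := n_le_s na nb.
have [s0|s0] := eqVneq (enorm (a + b)) 0.
  by rewrite s0 invr0 mul0r.
have ps : 0 < enorm (a + b) by rewrite lt_neqAle eq_sym s0 enorm_ge0.
by rewrite mulrC ler_pdivrMr // mul1r.
Qed.

Lemma nu a b : enorm a = 1 -> enorm b = 1 -> crossv a b = enorm (a + b) *: uu a b.
Proof.
move=> na nb; rewrite /uu scalerA.
have [s0|s0] := eqVneq (enorm (a + b)) 0.
  have h := n_le_s na nb; rewrite s0 in h.
  rewrite s0 mul0r scale0r; apply: enorm_eq0; apply/le_anti.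
  by rewrite h enorm_ge0.
by rewrite mulfV // scale1r.
Qed.

Lemma su_diff a b a' b' : enorm a = 1 -> enorm b = 1 -> enorm a' = 1 -> enorm b' = 1 ->
  enorm (a + b) * enorm (uu a b - uu a' b') <= 2 * (enorm (a - a') + enorm (b - b')).
Proof.
move=> na nb na' nb'.
have E : enorm (a + b) *: (uu a b - uu a' b') =
  (crossv a b - crossv a' b') + (enorm (a' + b') - enorm (a + b)) *: uu a' b'.
  rewrite (nu na nb) (nu na' nb'); apply: vec3_eq; rewrite !mxE; ring.
have := enormZ (enorm (a + b)) (uu a b - uu a' b').
rewrite E ger0_norm ?enorm_ge0 // => <-.
apply: le_trans (enormD _ _) _; rewrite crossB enormZ.
have h1 : enorm (crossv (a - a') b + crossv a' (b - b')) <= enorm (a - a') + enorm (b - b').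
  apply: le_trans (enormD _ _) _.
  have := cross_le (a - a') b; have := cross_le a' (b - b').
  rewrite nb na' mulr1 mul1r; lra.
have h2 : `|enorm (a' + b') - enorm (a + b)| * enorm (uu a' b') <= enorm (a - a') + enorm (b - b').
  have := uu_le1 na' nb'; have := enorm_rev (a' + b') (a + b).
  have -> : a' + b' - (a + b) = - ((a - a') + (b - b')).
    apply: vec3_eq; rewrite !mxE; ring.
  rewrite enormN => r1 r2.
  have := enormD (a - a') (b - b') => r3.
  have := normr_ge0 (enorm (a' + b') - enorm (a + b)).
  have := enorm_ge0 (uu a' b'). nra.
lra.
Qed.


Lemma Tmap_H (psi : R -> R) x1 x2 v : x1 != 0 -> x2 != 0 -> psi 2 = 0 ->
  Tmap psi x1 x2 v = psi (enorm (unitv x1 - unitv x2)) *: G (unitv x2) (unitv x1) v.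
Proof.
move=> h1 h2 p2; rewrite /Tmap; case: ifP => [s0|/negbFE s0].
  by rewrite Rrot_G ?unitv_norm // addrC.
move: s0; rewrite addr_eq0 => /eqP ->.
have -> : - unitv x2 - unitv x2 = (-2) *: unitv x2.
  apply: vec3_eq; rewrite !mxE; ring.
by rewrite enormZ unitv_norm // normrN mulr1 ger0_norm // p2 scale0r.
Qed.

Lemma Gbound a b v : enorm a = 1 -> enorm b = 1 -> enorm (G a b v) <= 5 * enorm v.
Proof.
move=> na nb; have hu := uu_le1 na nb.
have -> : G a b v = dotv a b *: v + dotv (- b) v *: a + dotv a v *: b + dotv (2 *: uu a b) v *: uu a b.
  rewrite /G; apply: vec3_eq; rewrite !dotvE !mxE; ring.
set u := uu a b in hu *.
have e5 := enorm_ge0 u; have e1 := enorm_ge0 v.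
apply: le_trans (enormD _ _) _; apply: le_trans (lerD (enormD3 _ _ _) (lexx _)) _.
have t1 : enorm (dotv a b *: v) <= enorm v by apply: tb; rewrite na nb; lra.
have t2 : enorm (dotv (- b) v *: a) <= enorm v by apply: tb; rewrite enormN na nb; lra.
have t3 : enorm (dotv a v *: b) <= enorm v by apply: tb; rewrite na nb; lra.
have t4 : enorm (dotv (2 *: u) v *: u) <= 2 * enorm v.
  apply: tb; rewrite enormZ ger0_norm //.
  have h1 : enorm u * enorm u <= 1 by nra.
  have h2 : enorm v * (enorm u * enorm u) <= enorm v by nra.
  nra.
lra.
Qed.


Lemma Hdiff (psi : R -> R) (M V : R) a b v a' b' v' :
  0 <= M -> {in `[0, 2] &, forall x y : R, `|psi x - psi y| <= M * `|x - y|} ->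
  psi 2 = 0 ->
  enorm a = 1 -> enorm b = 1 -> enorm a' = 1 -> enorm b' = 1 -> enorm v' <= V ->
  enorm (psi (enorm (b - a)) *: G a b v - psi (enorm (b' - a')) *: G a' b' v') <=
  20 * M * (1 + V) * (enorm (a - a') + enorm (b - b') + enorm (v - v')).
Proof.
move=> M0 lip p2 na nb na' nb' hv.
have V0 : 0 <= V by apply: le_trans hv; exact: enorm_ge0.
have dint : forall a b, enorm a = 1 -> enorm b = 1 -> enorm (b - a) \in `[0, 2].
  move=> x y nx ny; rewrite in_itv /= enorm_ge0 /=.
  by have := enormD y (- x); rewrite enormN nx ny.
have dS : forall a b, enorm a = 1 -> enorm b = 1 -> 2 - enorm (b - a) <= enorm (a + b).
  move=> x y nx ny.
  have dx := unit_dot nx; have dy := unit_dot ny.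
  have E : enorm (y - x) ^+ 2 + enorm (x + y) ^+ 2 = 4.
    rewrite !enorm_sq.
    have -> : dotv (y - x) (y - x) + dotv (x + y) (x + y) = 2 * dotv x x + 2 * dotv y y.
      rewrite !dotvE !mxE; ring.
    rewrite dx dy; ring.
  have S2 : enorm (x + y) <= 2 by have := enormD x y; rewrite nx ny.
  have := dint x y nx ny; rewrite in_itv /= => /andP[d0 d2].
  have := enorm_ge0 (x + y); nra.
set d := enorm (b - a); set d' := enorm (b' - a').
set p := psi d; set p' := psi d'.
set da := enorm (a - a'); set db := enorm (b - b'); set dv := enorm (v - v').
have ea : 0 <= da by exact: enorm_ge0.
have eb : 0 <= db by exact: enorm_ge0.
have ev : 0 <= dv by exact: enorm_ge0.
have d02 := dint a b na nb; have d02' := dint a' b' na' nb'.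
have two02 : (2 : R) \in `[0, 2] by rewrite in_itv /=; apply/andP; split.
have hp : `|p| <= M * (2 - d).
  have h2d : 0 <= 2 - d by move: d02; rewrite in_itv /= subr_ge0 => /andP[_].
  by have := lip d 2 d02 two02; rewrite p2 subr0 distrC (ger0_norm h2d).
have hpS : `|p| <= M * enorm (a + b).
  apply: le_trans hp _; apply: ler_wpM2l => //; exact: dS.
have hp2 : `|p| <= 2 * M.
  apply: le_trans hp _; move: d02; rewrite in_itv /= => /andP[d0 _].
  rewrite [M * _]mulrC; apply: ler_wpM2r => //; by rewrite lerBlDr lerDl.
have hpu : `|p| * enorm (uu a b - uu a' b') <= 2 * M * (da + db).
  have := su_diff na nb na' nb'; have := enorm_ge0 (uu a b - uu a' b').
  have := enorm_ge0 (a + b); have := normr_ge0 p.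
  rewrite -/da -/db => q1 q2 q3 q4.
  have q5 : `|p| * enorm (uu a b - uu a' b') <= M * enorm (a + b) * enorm (uu a b - uu a' b').
    by apply: ler_wpM2r.
  nra.
have hpp : `|p - p'| <= M * (da + db).
  apply: le_trans (lip d d' d02 d02') _; apply: ler_wpM2l => //.
  apply: le_trans (enorm_rev _ _) _.
  have -> : b - a - (b' - a') = (b - b') + - (a - a').
    apply: vec3_eq; rewrite !mxE; ring.
  by apply: le_trans (enormD _ _) _; rewrite enormN -/da -/db addrC.
have hG := Gbound v' na' nb'.
have hGd := @Gdiff a b v a' b' v' V na nb na' nb' (uu_le1 na nb) (uu_le1 na' nb') hv.
rewrite -/da -/db -/dv in hGd.
have -> : p *: G a b v - p' *: G a' b' v' = p *: (G a b v - G a' b' v') + (p - p') *: G a' b' v'.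
  apply: vec3_eq; rewrite !mxE; ring.
apply: le_trans (enormD _ _) _; rewrite !enormZ.
have e1 := enorm_ge0 (G a b v - G a' b' v'); have e2 := enorm_ge0 (G a' b' v').
have e3 := normr_ge0 p; have e4 := normr_ge0 (p - p'); have e5 := enorm_ge0 v'.
have e6 := enorm_ge0 (uu a b - uu a' b').
have k1 : `|p| * enorm (G a b v - G a' b' v') <=
    `|p| * (5 * dv + 3 * V * (da + db)) + 4 * V * (`|p| * enorm (uu a b - uu a' b')).
  have := ler_wpM2l e3 hGd; lra.
have k2 : `|p| * (5 * dv + 3 * V * (da + db)) <= 2 * M * (5 * dv + 3 * V * (da + db)).
  apply: ler_wpM2r => //; nra.
have k3 : 4 * V * (`|p| * enorm (uu a b - uu a' b')) <= 4 * V * (2 * M * (da + db)).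
  apply: ler_wpM2l => //; nra.
have k4 : `|p - p'| * enorm (G a' b' v') <= M * (da + db) * (5 * V).
  apply: ler_pM => //; nra.
have k5 : 0 <= M * V * (da + db) by nra.
have k6 : 0 <= M * V * dv by rewrite !mulr_ge0.
have k7 : 0 <= M * dv by nra.
have k8 : 0 <= M * (da + db) by nra.
nra.
Qed.


Lemma dist9_1 x1 x2 v y1 y2 w : enorm (x1 - y1) <= dist9 x1 x2 v y1 y2 w.
Proof.
apply: ler_wsqrtr; have := dot_ge0 (x2 - y2); have := dot_ge0 (v - w); lra.
Qed.
Lemma dist9_2 x1 x2 v y1 y2 w : enorm (x2 - y2) <= dist9 x1 x2 v y1 y2 w.
Proof.
apply: ler_wsqrtr; have := dot_ge0 (x1 - y1); have := dot_ge0 (v - w); lra.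
Qed.
Lemma dist9_3 x1 x2 v y1 y2 w : enorm (v - w) <= dist9 x1 x2 v y1 y2 w.
Proof.
apply: ler_wsqrtr; have := dot_ge0 (x2 - y2); have := dot_ge0 (x1 - y1); lra.
Qed.

End V.

Section A.
Local Open Scope classical_set_scope.
Local Open Scope ring_scope.
Variable R : realType.
Lemma quot_derive (f : R -> R) (A : set R) (x l : R) :
  (fun y => (f y - f x) / (y - x)) @ within A x^' --> l ->
  (exists2 d, 0 < d & forall y, `|x - y| < d -> A y) ->
  is_derive x 1 f l.
Proof.
move/cvgrPdist_lt => H [d1 d10 Hd0].
have L : (fun h : R => h^-1 *: ((f \o shift x) (h *: 1) - f x)) @ 0^' --> l.
  apply/cvgrPdist_lt => e e0.
  have := H e e0; rewrite near_withinE => /nbhs_normP [d d0 Hd].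
  rewrite near_withinE; apply/nbhs_normP.
  exists (Num.min d d1); first by rewrite /= lt_min d0 d10.
  move=> h /=; rewrite lt_min sub0r normrN => /andP[hd hd0] h0.
  have nh : `|x - (h + x)| = `|h| by rewrite (addrC h x) opprD addrA subrr sub0r normrN.
  have bx : ball_ Num.Def.normr x d (h + x) by rewrite /ball_ /= nh.
  have := Hd (h + x) bx; rewrite -subr_eq0 addrK => /(_ h0).
  have Ah := Hd0 (h + x) (ltac:(by rewrite nh)).
  move=> /(_ Ah).
  by rewrite /shift /= [h%:A]mulr1 mulrC.
split; first by apply/cvg_ex; exists l.
exact: cvg_lim L.
Qed.
Lemma quot_cont (f : R -> R) (A : set R) (x l : R) :
  (fun y => (f y - f x) / (y - x)) @ within A x^' --> l ->
  f @ within A (nbhs x) --> f x.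
Proof.
move/cvgrPdist_lt => H.
have := H 1 ltr01; rewrite near_withinE => /nbhs_normP [d d0 Hd].
apply/cvgrPdist_lt => e e0.
rewrite near_withinE; apply/nbhs_normP.
have k0 : 0 < `|l| + 1 by rewrite ltr_pwDr.
exists (Num.min d (e / (`|l| + 1))); first by rewrite /= lt_min d0 divr_gt0.
move=> t /=; rewrite lt_min => /andP[td te] At.
have [->|tx] := eqVneq t x; first by rewrite subrr normr0.
have := Hd t td tx At => Hq.
have tx0 : t - x != 0 by rewrite subr_eq0.
have -> : f x - f t = - ((f t - f x) / (t - x) * (t - x)).
  by rewrite divfK // opprB.
rewrite normrN normrM.
have q1 : `|(f t - f x) / (t - x)| <= `|l| + 1.
  have := ler_distD l 0 ((f t - f x) / (t - x)).
  rewrite sub0r normrN => h; apply: (le_trans h).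
  by rewrite sub0r normrN lerD2l ltW.
have te' : `|t - x| < e / (`|l| + 1) by rewrite distrC.
apply: (le_lt_trans (ler_wpM2r (normr_ge0 _) q1)).
by rewrite mulrC -ltr_pdivlMr.
Qed.

Lemma psi_lip (psi dpsi : R -> R) : C1_on_02_with psi dpsi ->
  exists M, 0 <= M /\ {in `[0, 2] &, forall x y : R, `|psi x - psi y| <= M * `|x - y|}.
Proof.
move=> [Hq Hc].
have cont : {within `[0, 2], continuous psi}.
  by apply/subspace_continuousP => x Ax; apply: quot_cont (Hq x _).
have le02 : (0:R) <= 2 by [].
have [cM cM02 HM] := EVT_max le02 Hc.
have [cm cm02 Hm] := EVT_min le02 Hc.
exists (`|dpsi cM| + `|dpsi cm|); split; first by rewrite addr_ge0.
have bd : forall t, t \in `[0, 2] -> `|dpsi t| <= `|dpsi cM| + `|dpsi cm|.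
  move=> t t02; rewrite ler_norml.
  have := Hm t t02; have := HM t t02.
  have /andP[a1 a2] : - `|dpsi cM| <= dpsi cM <= `|dpsi cM| by rewrite -ler_norml.
  have /andP[b1 b2] : - `|dpsi cm| <= dpsi cm <= `|dpsi cm| by rewrite -ler_norml.
  move=> h1 h2; apply/andP; split; lra.
move=> x y x02 y02.
wlog xy : x y x02 y02 / x <= y.
  move=> W; have [xy|yx] := leP x y; first exact: W.
  by rewrite distrC (distrC x); apply: W => //; apply: ltW.
have sub : `[x, y] `<=` `[0, 2].
  move=> t /=; rewrite !in_itv /= => /andP[xt ty].
  move: x02 y02; rewrite !in_itv /= => /andP[x0 _] /andP[_ y2].
  apply/andP; split; [exact: le_trans xt | exact: le_trans y2].
have [c cxy Hc'] : exists2 c, c \in `[x, y] & psi y - psi x = dpsi c * (y - x).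
  apply: MVT_segment xy _ _; last exact: continuous_subspaceW cont.
  move=> z zxy.
  have z02 : 0 < z < 2.
    move: zxy x02 y02; rewrite !in_itv /= => /andP[xz zy] /andP[x0 _] /andP[_ y2].
    apply/andP; split; [exact: le_lt_trans xz | exact: lt_le_trans y2].
  have z02' : z \in `[0, 2] by rewrite in_itv /=; case/andP: z02 => /ltW -> /ltW ->.
  apply: (@quot_derive psi _ z _ (Hq z z02')).
  case/andP: z02 => z0 z2.
  exists (Num.min z (2 - z)); first by rewrite /= lt_min z0 subr_gt0.
  move=> t /=; rewrite lt_min => /andP[h1 h2]; rewrite in_itv /=.
  move: (ler_norm (z - t)) (ler_norm (- (z - t))); rewrite normrN => a1 a2.
  apply/andP; split; lra.
have cb := bd c (sub c cxy).
rewrite distrC Hc' normrM distrC; exact: ler_wpM2r.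
Qed.

End A.

Unset Implicit Arguments.

Theorem lemma3p5 (R : realType) (psi dpsi : R -> R) :
  C1_on_02_with psi dpsi ->
  {in `[0, 2] &, forall x y : R, x <= y -> psi y <= psi x} ->
  {in `[0, 2], forall x : R, 0 <= psi x} ->
  psi 2 = 0 ->
  dpsi 2 < 0 ->
  locally_lipschitz_on_Q (Tmap psi).
Proof.
move=> C1 _ _ p2 _.
have [M [M0 lip]] := @psi_lip R psi dpsi C1.
move=> x1 x2 v h1 h2.
have px1 : 0 < enorm x1 by rewrite lt_neqAle eq_sym enorm_neq0 // enorm_ge0.
have px2 : 0 < enorm x2 by rewrite lt_neqAle eq_sym enorm_neq0 // enorm_ge0.
set m := Num.min (enorm x1) (enorm x2) / 2.
have m0 : 0 < m by rewrite divr_gt0 // lt_min px1 px2.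
have m1 : 2 * m <= enorm x1 by rewrite /m mulrC divfK // ge_min lexx.
have m2 : 2 * m <= enorm x2 by rewrite /m mulrC divfK // ge_min lexx orbT.
set V := enorm v + m.
exists m; split => //.
exists (20 * M * (1 + V) * (4 / m + 1)).
move=> y1 y2 w z1 z2 u hy1 hy2 hz1 hz2 dy dz.
rewrite !Tmap_H //.
have hu : enorm u <= V.
  have := enormD (u - v) v; rewrite subrK => h.
  have := dist9_3 z1 z2 u x1 x2 v; rewrite /V; lra.
have zb : forall z x, enorm (z - x) < m -> 2 * m <= enorm x -> m <= enorm z.
  move=> z x hzx hx; have := enormD (x - z) z; rewrite subrK enormB; lra.
have z1m : m <= enorm z1 := zb _ _ (le_lt_trans (dist9_1 _ _ _ _ _ _) dz) m1.
have z2m : m <= enorm z2 := zb _ _ (le_lt_trans (dist9_2 _ _ _ _ _ _) dz) m2.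
set D := dist9 y1 y2 w z1 z2 u.
have ul : forall y z, z != 0 -> y != 0 -> m <= enorm z -> enorm (y - z) <= D ->
    enorm (unitv y - unitv z) <= 2 / m * D.
  move=> y z hz hy hzm hyz; apply: le_trans (unitv_lip hy hz) _.
  have pz : 0 < enorm z by apply: lt_le_trans hzm.
  have D0 : 0 <= D by apply: le_trans hyz; exact: enorm_ge0.
  apply: (@le_trans _ _ (2 * D / enorm z)).
    by rewrite ler_wpM2r ?invr_ge0 ?enorm_ge0 // ler_wpM2l.
  rewrite [2 / m * D]mulrAC; apply: ler_wpM2l; first by rewrite mulr_ge0.
  by rewrite lef_pV2 ?posrE.
have ua := ul y2 z2 hz2 hy2 z2m (dist9_2 _ _ _ _ _ _).
have ub := ul y1 z1 hz1 hy1 z1m (dist9_1 _ _ _ _ _ _).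
have uv : enorm (w - u) <= D := dist9_3 _ _ _ _ _ _.
apply: le_trans (@Hdiff R psi M V (unitv y2) (unitv y1) w (unitv z2) (unitv z1) u
   M0 lip p2 (unitv_norm hy2) (unitv_norm hy1) (unitv_norm hz2) (unitv_norm hz1) hu) _.
have V0 : 0 <= V by rewrite addr_ge0 ?enorm_ge0 // ltW.
apply: (@le_trans _ _ (20 * M * (1 + V) * ((4 / m + 1) * D))); last by rewrite mulrA.
apply: ler_wpM2l; first by rewrite !mulr_ge0 // addr_ge0.
have -> : (4 / m + 1) * D = 2 / m * D + 2 / m * D + D by ring.
lra.
Qed.
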